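(* Let $(C^\gamma_{\alpha\beta},\eta,e)$ be a semisimple Frobenius manifold on $\mathcal U\subset\mathbb C^n$, with $L_\alpha=\partial/\partial x^\alpha-\hbar^{-1}C_\alpha(x)$, and let $T$ be a dressing transformation for $\{L_\alpha\}$ and $\widetilde T$ one for $\{\widetilde L_i\}$ (see context). For $b\in Diag((\hbar))$ put $\varphi(b)=TbT^{-1}$, $\widetilde\varphi(b)=\widetilde Tb\widetilde T^{-1}$. Then for every $b\in Diag((\hbar))$ and all $\alpha,i$: $$[L_\alpha,\varphi(b)_{\le-1}]=\hbar^{-1}[C_\alpha,\varphi(b)_0],\qquad [\widetilde L_i,\widetilde\varphi(b)_{\le0}]=[e_i,\widetilde\varphi(b)_1].$$
   Context: Frobenius manifold in flat coordinates $x^\alpha$: analytic $C^\gamma_{\alpha\beta}(x)$, constant nondegenerate symmetric $\eta_{\alpha\beta}$, product $\partial_\alpha\circ\partial_\beta=\sum_\gamma C^\gamma_{\alpha\beta}\partial_\gamma$ commutative associative with unit $\partial/\partial x^1$, $\eta$ invariant, $(C_\alpha)^\gamma_\beta=C^\gamma_{\alpha\beta}$, and the $L_\alpha$ pairwise commute. Semisimple: $T_x\mathcal U=\oplus_i\theta_i$ with one-dimensional common eigenspaces of all multiplication operators. With $T_0(x)$ the matrix of columns $v_i(x)\in\theta_i\setminus0$, one has $T_0^{-1}C_\alpha T_0=a_\alpha=\partial u/\partial x^\alpha$ diagonal, $u=diag(u^1,\dots,u^n)$ gives coordinates, and $\widetilde L_i=\sum_\alpha\frac{\partial x^\alpha}{\partial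 u^i}T_0^{-1}L_\alpha T_0=\partial/\partial u^i+q_i(u)-\hbar^{-1}e_i$, $(e_i)_{jk}=\delta_{ij}\delta_{ik}$. A dressing transformation for $\{L_\alpha\}$ is $T(\hbar,x)\in Mat(n,\mathbb C)[[\hbar]]$, invertible, with $T^{-1}L_\alpha T=\partial/\partial x^\alpha+h_\alpha$, $h_\alpha\in\hbar^{-1}Diag[[\hbar]]$ for all $\alpha$ (it exists and is unique up to right multiplication by $Diag[[\hbar]]$-valued functions, so $\varphi(b)$ is well defined); a dressing transformation for $\{\widetilde L_i\}$ is $\widetilde T=Id+\sum_{k\ge1}\hbar^k\widetilde T_k(u)$ with $\widetilde T^{-1}\widetilde L_i\widetilde T=\partial/\partial u^i-e_i\hbar^{-1}+\sum_{k\ge0}\hbar^kh_{k,i}$, $h_{k,i}$ diagonal. $Diag((\hbar))$: formal Laurent series in $\hbar$ with diagonal-matrix coefficients. For a Laurent series $v=\sum_l v_l\hbar^l$: $v_j$ is the coefficient of $\hbar^j$, $v_{\le k}=\sum_{l\le k}v_l\hbar^l$. For an operator $D=\partial+A$ and a matrix function $M$, $[D,M]=\partial M+[A,M]$. *)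

(* Defs.v *)
From HB Require Import structures.
From mathcomp Require Import all_boot all_order all_algebra.
From mathcomp Require Import all_classical all_reals all_analysis.
From mathcomp Require Export complex.
Set Implicit Arguments. Unset Strict Implicit. Unset Printing Implicit Defensive.
Import Order.TTheory GRing.Theory Num.Theory.
Import numFieldNormedType.Exports.
Local Open Scope ring_scope.

Section Defs.
Variables (K : numFieldType) (n : nat).

Notation pt := 'rV[K]_n.
Notation mat := 'M[K]_n.

(* the coordinate vector field d/dx^a, as a direction in K^n *)
Definition cvec (a : 'I_n) : pt := delta_mx 0 a.

Definition pd (a : 'I_n) (f : pt -> mat) (x : pt) : mat := 'D_(cvec a) f x.

(* holomorphic on U (complex Frechet differentiability) *)
Definition holo_on {V : normedModType K} (U : set pt) (f : pt -> V) :=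
  forall x, U x -> differentiable f x.

Definition open_set (U : set pt) := open U.

(* A Laurent series with matrix coefficients: k |-> coefficient of hbar^k. *)
(* A (lower) bound for the support, chosen classically; 0 if none exists. *)
Definition lowb (a : int -> mat) : int :=
  match pselect (exists N : int, forall k, k < N -> a k = 0) with
  | left P => projT1 (cid P)
  | right _ => 0
  end.

(* Cauchy product of Laurent series (correct whenever both supports are
   bounded below, which is the case for all series in Mat((hbar))). *)
Definition mulL (a b : int -> mat) (k : int) : mat :=
  \sum_(t < (absz (k - lowb a - lowb b)%R).+1)
     a (lowb a + t%:Z) *m b (k - lowb a - t%:Z).

(* x-dependent Laurent series: k |-> (x |-> coefficient of hbar^k) *)
Definition ser := int -> pt -> mat.

Definition mulS (a b : ser) : ser :=
  fun k x => mulL (fun j => a j x) (fun j => b j x) k.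
Definition addS (a b : ser) : ser := fun k x => a k x + b k x.
Definition subS (a b : ser) : ser := fun k x => a k x - b k x.
Definition dS (a : 'I_n) (s : ser) : ser := fun k => pd a (s k).
Definition monom (m : int) (M : pt -> mat) : ser :=
  fun k x => if k == m then M x else 0.
Definition cstS (b : int -> mat) : ser := fun k _ => b k.
Definition truncle (m : int) (s : ser) : ser :=
  fun k x => if k <= m then s k x else 0.

(* [d/dx^a + A, M] = dM + [A, M] *)
Definition opcomm (a : 'I_n) (A M : ser) : ser :=
  addS (dS a M) (subS (mulS A M) (mulS M A)).
(* D^{-1} (d/dx^a + A) D - d/dx^a = D^{-1} dD + D^{-1} A D, written with an
   explicit inverse Dinv *)
Definition gauge (a : 'I_n) (A D Dinv : ser) : ser :=
  mulS Dinv (addS (dS a D) (mulS A D)).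

(* s is in Mat(n, O(U))[[hbar]] : holomorphic coefficients, no negative powers *)
Definition powser_on (U : set pt) (s : ser) :=
  (forall k, holo_on U (s k)) /\ (forall k x, k < 0 -> U x -> s k x = 0).

Definition ser_inverse_on (U : set pt) (D Dinv : ser) :=
  powser_on U D /\ powser_on U Dinv /\
  (forall k x, U x -> mulS D Dinv k x = monom 0 (fun _ => 1%:M) k x) /\
  (forall k x, U x -> mulS Dinv D k x = monom 0 (fun _ => 1%:M) k x).

(* b in Diag((hbar)) : constant Laurent series with diagonal coefficients *)
Definition diag_laurent (b : int -> mat) :=
  (forall k, is_diag_mx (b k)) /\ (exists N : int, forall k, k < N -> b k = 0).

(* ---------------- Frobenius manifold in flat coordinates ----------------
   C a x = the matrix C_a(x), with (C a x) g b = C^g_{ab}(x);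
   e1 = index of the unit vector field d/dx^1. *)
Definition frobenius_manifold (U : set pt) (C : 'I_n -> pt -> mat)
    (eta : mat) (e1 : 'I_n) :=
  open U /\
  (forall a, holo_on U (C a)) /\
  eta^T = eta /\ eta \in unitmx /\
  forall x, U x ->
  (forall a b g, C a x g b = C b x g a) /\
  (forall a b d e, \sum_g C a x g b * C g x e d = \sum_g C b x g d * C a x e g) /\
  C e1 x = 1%:M /\
  (forall a b d, \sum_g C a x g b * eta g d = \sum_g eta a g * C b x g d) /\
  (* the operators L_a = d_a - hbar^{-1} C_a pairwise commute: the
     hbar^{-1} and hbar^{-2} parts of [L_a, L_b] vanish *)
  (forall a b, pd a (C b) x = pd b (C a) x /\ C a x *m C b x = C b x *m C a x).

(* semisimplicity: T_x U is a direct sum of one-dimensional common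
   eigenspaces of all the multiplication operators C_a(x) *)
Definition semisimple_on (U : set pt) (C : 'I_n -> pt -> mat) :=
  forall x, U x -> exists P : mat, P \in unitmx /\
    (forall a, is_diag_mx (invmx P *m C a x *m P)) /\
    (forall i j : 'I_n, i != j ->
       exists a, (invmx P *m C a x *m P) i i != (invmx P *m C a x *m P) j j).

(* L_a = d/dx^a - hbar^{-1} C_a : the potential part *)
Definition Lpot (C : 'I_n -> pt -> mat) (a : 'I_n) : ser :=
  monom (-1) (fun x => - C a x).

Definition dressing_L (U : set pt) (C : 'I_n -> pt -> mat) (T Tinv : ser) :=
  ser_inverse_on U T Tinv /\
  exists h : 'I_n -> ser, forall a k x, U x ->
    is_diag_mx (h a k x) /\ (k < -1 -> h a k x = 0) /\
    gauge a (Lpot C a) T Tinv k x = h a k x.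

Definition Emx (i : 'I_n) : mat := delta_mx i i.

Definition qpot (C : 'I_n -> pt -> mat) (T0 : pt -> mat) (X : pt -> pt)
    (i : 'I_n) (u : pt) : mat :=
  \sum_a ('D_(cvec i) X u) 0 a *: (invmx (T0 (X u)) *m pd a T0 (X u)).

(* Ltilde_i = d/du^i + q_i(u) - hbar^{-1} e_i : the potential part *)
Definition Ltpot (C : 'I_n -> pt -> mat) (T0 : pt -> mat) (X : pt -> pt)
    (i : 'I_n) : ser :=
  addS (monom 0 (qpot C T0 X i)) (monom (-1) (fun _ => - Emx i)).

Definition dressing_Lt (V : set pt) (C : 'I_n -> pt -> mat) (T0 : pt -> mat)
    (X : pt -> pt) (Tt Ttinv : ser) :=
  ser_inverse_on V Tt Ttinv /\
  (forall u, V u -> Tt 0 u = 1%:M) /\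
  exists h : 'I_n -> ser, forall i k u, V u ->
    is_diag_mx (h i k u) /\ (k < 0 -> h i k u = 0) /\
    gauge i (Ltpot C T0 X i) Tt Ttinv k u
      = monom (-1) (fun _ => - Emx i) k u + h i k u.

Definition phi (T Tinv : ser) (b : int -> mat) : ser :=
  mulS (mulS T (cstS b)) Tinv.

End Defs.
Arguments cvec {K n}.
Arguments Emx {K n}.

(* Main.v *)
Require Import Defs.
From HB Require Import structures.
From mathcomp Require Import all_boot all_order all_algebra.
From mathcomp Require Import all_classical all_reals all_analysis.
From mathcomp Require Import complex zify.
Import Order.TTheory GRing.Theory Num.Theory.
Import numFieldNormedType.Exports.
Local Open Scope classical_set_scope.
Local Open Scope ring_scope.
Set Implicit Arguments. Unset Strict Implicit. Unset Printing Implicit Defensive.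
Section Alg.
Variables (K : numFieldType) (n : nat).
Local Notation mat := 'M[K]_n.
Implicit Types (a b c : int -> mat).

Definition vanish (N : int) a := forall j, j < N -> a j = 0.

Lemma lowb_spec a N : vanish N a -> vanish (lowb a) a.
Proof.
move=> H; rewrite /lowb; case: pselect => [P|nP]; last by exfalso; apply: nP; exists N.
by case: (cid P).
Qed.

Definition wsum a b (N : int) (L : nat) (k : int) :=
  \sum_(t < L) a (N + t%:Z) *m b (k - N - t%:Z).

Lemma wsum_ext a b N Nb L L' k : vanish Nb b -> k - N - Nb < L%:Z -> (L <= L')%N ->
  wsum a b N L' k = wsum a b N L k.
Proof.
move=> vb hk hL; rewrite /wsum (big_ord_widen L' (fun t : nat => a (N + t%:Z) *m b (k - N - t%:Z)) hL).
rewrite [RHS]big_mkcond /=; apply: eq_bigr => t _; case: ifP => // /negbT; rewrite -leqNgt => ht.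
by rewrite vb ?mulmx0 //; lia.
Qed.

Lemma wsum_shift a b N d L k : vanish N a ->
  wsum a b (N - d%:Z) (d + L) k = wsum a b N L k.
Proof.
move=> va; rewrite /wsum big_split_ord /= big1 ?add0r.
  by apply: eq_bigr => t _; congr (a _ *m b _); lia.
by move=> t _; rewrite va ?mul0mx //; have := ltn_ord t; lia.
Qed.

Lemma wsum_eq2 a b N1 N2 M1 M2 k : N1 <= N2 -> vanish N2 a -> vanish M1 b -> vanish M2 b ->
  wsum a b N1 (absz (k - N1 - M1)%R).+1 k = wsum a b N2 (absz (k - N2 - M2)%R).+1 k.
Proof.
move=> h va v1 v2.
have e : N1 = N2 - (absz (N2 - N1))%:Z by lia.
set d := absz (N2 - N1).
rewrite -(@wsum_shift a b N2 d _ k va) -e.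
rewrite -(@wsum_ext a b N1 M1 _ ((absz (k - N1 - M1)%R).+1 + (d + (absz (k - N2 - M2)%R).+1))%N k v1) //; last lia.
rewrite -(@wsum_ext a b N1 M2 (d + (absz (k - N2 - M2)%R).+1) ((absz (k - N1 - M1)%R).+1 + (d + (absz (k - N2 - M2)%R).+1))%N k v2) //.
all: rewrite ?/d; try lia.
Qed.

Lemma mulL_win a b Na Nb k : vanish Na a -> vanish Nb b ->
  mulL a b k = wsum a b Na (absz (k - Na - Nb)%R).+1 k.
Proof.
move=> va vb; have la := @lowb_spec a Na va; have lb := @lowb_spec b Nb vb.
rewrite /mulL -/(wsum a b (lowb a) _ k).
case: (lerP (lowb a) Na) => h.
  exact: wsum_eq2.
by symmetry; apply: wsum_eq2 => //; apply: ltW.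
Qed.

Lemma mulL_vanish a b Na Nb : vanish Na a -> vanish Nb b -> vanish (Na + Nb) (mulL a b).
Proof.
move=> va vb k hk; rewrite (mulL_win k va vb) /wsum big1 // => t _.
by rewrite vb ?mulmx0 //; lia.
Qed.

Lemma mulL_win_rev a b Na Nb k : vanish Na a -> vanish Nb b ->
  mulL a b k = \sum_(t < (absz (k - Na - Nb)%R).+1) a (k - Nb - t%:Z) *m b (Nb + t%:Z).
Proof.
move=> va vb; case: (ltrP (k - Na - Nb) 0) => hk.
  rewrite (mulL_vanish va vb) ?big1 //; last lia.
  by move=> t _; rewrite va ?mul0mx //; lia.
rewrite (mulL_win k va vb) /wsum (reindex_inj rev_ord_inj) /=.
apply: eq_bigr => t _; have := ltn_ord t => ht.
congr (a _ *m b _); rewrite subSS; lia.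
Qed.

Lemma mulL_comm a b Na Nb k : vanish Na a -> vanish Nb b ->
  (forall i j, a i *m b j = b j *m a i) -> mulL a b k = mulL b a k.
Proof.
move=> va vb hc; rewrite (mulL_win_rev k va vb) (mulL_win k vb va) /wsum.
have -> : (k - Na - Nb) = k - Nb - Na by lia.
by apply: eq_bigr => t _; rewrite hc.
Qed.

Lemma mulL_addl a1 a2 b N Nb k : vanish N a1 -> vanish N a2 -> vanish Nb b ->
  mulL (fun j => a1 j + a2 j) b k = mulL a1 b k + mulL a2 b k.
Proof.
move=> v1 v2 vb.
have v12 : vanish N (fun j => a1 j + a2 j) by move=> j hj; rewrite v1 // v2 // addr0.
rewrite (mulL_win k v12 vb) (mulL_win k v1 vb) (mulL_win k v2 vb) /wsum -big_split /=.
by apply: eq_bigr => t _; rewrite mulmxDl.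
Qed.

Lemma mulL_addr a b1 b2 N Nb k : vanish N a -> vanish Nb b1 -> vanish Nb b2 ->
  mulL a (fun j => b1 j + b2 j) k = mulL a b1 k + mulL a b2 k.
Proof.
move=> va v1 v2.
have v12 : vanish Nb (fun j => b1 j + b2 j) by move=> j hj; rewrite v1 // v2 // addr0.
rewrite (mulL_win k va v12) (mulL_win k va v1) (mulL_win k va v2) /wsum -big_split /=.
by apply: eq_bigr => t _; rewrite mulmxDr.
Qed.

Lemma mulL_0r a N k : vanish N a -> mulL a (fun _ => 0) k = 0.
Proof.
move=> va; have v0 : vanish 0 (fun _ : int => (0 : mat)) by [].
by rewrite (mulL_win k va v0) /wsum big1 // => t _; rewrite mulmx0.
Qed.

Lemma mulL_monoml (m : int) (M : mat) b Nb k : vanish Nb b ->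
  mulL (fun j => if j == m then M else 0) b k = M *m b (k - m).
Proof.
move=> vb; have vm : vanish m (fun j => if j == m then M else 0).
  by move=> j hj; case: eqP => // e; lia.
rewrite (mulL_win k vm vb) /wsum big_ord_recl /= addr0 subr0; case: eqP => // _.
rewrite big1 ?addr0 //.
by move=> t _; case: eqP => [e|]; [move: e; rewrite /bump /=; lia | rewrite mul0mx].
Qed.

Lemma mulL_monomr (m : int) (M : mat) a Na k : vanish Na a ->
  mulL a (fun j => if j == m then M else 0) k = a (k - m) *m M.
Proof.
move=> va; have vm : vanish m (fun j => if j == m then M else 0).
  by move=> j hj; case: eqP => // e; lia.
rewrite (mulL_win_rev k va vm) big_ord_recl /= addr0 subr0; case: eqP => // _.
rewrite big1 ?addr0 //.
by move=> t _; case: eqP => [e|]; [move: e; rewrite /bump /=; lia | rewrite mulmx0].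
Qed.


Definition Phi (M : nat) (e : int) a : 'M['M[K]_n]_M :=
  \matrix_(i < M, j < M) (if (i <= j)%N then a (j%:Z - i%:Z - e) else 0).

Lemma Phi_mul M e1 e2 a b : vanish (- e1) a -> vanish (- e2) b ->
  Phi M (e1 + e2) (mulL a b) = Phi M e1 a *m Phi M e2 b.
Proof.
move=> va vb; apply/matrixP => i j; rewrite !mxE.
under eq_bigr do rewrite !mxE.
case: leqP => hij; last first.
  rewrite big1 // => k _; case: leqP => h1; case: leqP => h2 //; rewrite ?mul0r ?mulr0 //.
  lia.
rewrite (mulL_win _ va vb) /wsum.
have -> : `|(j%:Z - i%:Z - (e1 + e2) - - e1 - - e2)%R|%N = (j - i)%N by lia.
rewrite -(big_mkord xpredT (fun k : nat => (if (i <= k)%N then a (k%:Z - i%:Z - e1) else 0) * (if (k <= j)%N then b (j%:Z - k%:Z - e2) else 0))).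
rewrite (big_cat_nat (leq0n i)) /=; last by apply: ltnW.
rewrite [X in _ = X + _]big_nat_cond [X in _ = X + _]big1 ?add0r; last first.
  by move=> k /andP[/andP[_ hk] _]; rewrite leqNgt hk mul0r.
rewrite (@big_cat_nat _ _ _ j.+1) //=; last by apply: ltnW.
rewrite [X in _ = _ + X]big_nat_cond [X in _ = _ + X]big1 ?addr0; last first.
  by move=> k /andP[/andP[hk _] _]; rewrite (leqNgt k j) hk mulr0.
rewrite -[X in \sum_(X <= _ < _) _](add0n i) big_addn big_mkord.
have -> : (j.+1 - i = (j - i).+1)%N by rewrite subSn.
apply: eq_bigr => t _; have ht := ltn_ord t.
rewrite leq_addl.
have -> : (t + i <= j)%N by lia.
congr (a _ * b _); lia.
Qed.

Lemma Phi_add M e a b : Phi M e (fun k => a k + b k) = Phi M e a + Phi M e b.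
Proof. by apply/matrixP => i j; rewrite !mxE; case: ifP; rewrite ?addr0. Qed.

Lemma Phi_sub M e a b : Phi M e (fun k => a k - b k) = Phi M e a - Phi M e b.
Proof. by apply/matrixP => i j; rewrite !mxE; case: ifP; rewrite ?subr0. Qed.

Lemma Phi_ext M e a b : (forall k, a k = b k) -> Phi M e a = Phi M e b.
Proof. by move=> h; apply/matrixP => i j; rewrite !mxE h. Qed.

Lemma Phi_delta M : Phi M 0 (fun k => if k == 0 then 1%:M else 0) = 1%:M.
Proof.
apply/matrixP => i j; rewrite !mxE.
have [->|nij] := eqVneq i j.
  by rewrite leqnn subrr subr0 eqxx.
case: leqP => h //; case: eqP => // e.
by exfalso; move/eqP: nij; apply; apply: val_inj => /=; lia.
Qed.

Lemma Phi_extract M e a b (j : 'I_M) : (0 < M)%N -> Phi M e a = Phi M e b ->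
  a (j%:Z - e) = b (j%:Z - e).
Proof.
move=> hM /matrixP /(_ (Ordinal hM) j); rewrite !mxE /= subr0.
by [].
Qed.


Lemma vanishW N N' a : N' <= N -> vanish N a -> vanish N' a.
Proof. by move=> h va j hj; apply: va; lia. Qed.

Lemma Phi_mulE M e e1 e2 a b Na Nb : e = e1 + e2 -> Na = - e1 -> Nb = - e2 ->
  vanish Na a -> vanish Nb b -> Phi M e (mulL a b) = Phi M e1 a *m Phi M e2 b.
Proof. by move=> -> -> ->; apply: Phi_mul. Qed.

Lemma Phi_0 M e : Phi M e (fun _ => 0) = 0.
Proof. by apply/matrixP => i j; rewrite !mxE; case: ifP. Qed.

Definition delta : int -> mat := fun k => if k == 0 then 1%:M else 0.

Lemma vanish_delta : vanish 0 delta.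
Proof. by move=> j hj; rewrite /delta; case: eqP => // e; lia. Qed.

Lemma mulL_deltal a N k : vanish N a -> mulL delta a k = a k.
Proof. by move=> va; rewrite (mulL_monoml 0 1%:M k va) mul1mx subr0. Qed.

Lemma mulL_deltar a N k : vanish N a -> mulL a delta k = a k.
Proof. by move=> va; rewrite (mulL_monomr 0 1%:M k va) mulmx1 subr0. Qed.

Lemma Phi_Z M e e' a N : e' = 1 + e -> N = - e -> vanish N a ->
  Phi M e' a = Phi M 1 delta *m Phi M e a.
Proof.
move=> he hN va; rewrite -(@Phi_mulE M e' 1 e delta a (-1) N) //; last by apply: (vanishW _ vanish_delta).
by apply: Phi_ext => k; rewrite (mulL_deltal k va).
Qed.

Lemma Z_comm M e a N : N = - e -> vanish N a ->
  Phi M 1 delta *m Phi M e a = Phi M e a *m Phi M 1 delta.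
Proof.
move=> hN va; rewrite -(@Phi_Z M e (1 + e) a N) //.
rewrite -(@Phi_mulE M (1 + e) e 1 a delta N (-1)) //; last by apply: (vanishW _ vanish_delta).
  by apply: Phi_ext => k; rewrite (mulL_deltar k va).
by rewrite addrC.
Qed.

Lemma Phi_mul0 M a b : vanish 0 a -> vanish 0 b ->
  Phi M 0 (mulL a b) = Phi M 0 a *m Phi M 0 b.
Proof. by move=> va vb; apply: (@Phi_mulE M 0 0 0 a b 0 0) => //; rewrite oppr0. Qed.

Lemma Phi_mul3 M e e1 e2 e3 a b c : e = e1 + e2 + e3 ->
  vanish (- e1) a -> vanish (- e2) b -> vanish (- e3) c ->
  Phi M e (mulL (mulL a b) c) = Phi M e1 a *m Phi M e2 b *m Phi M e3 c.
Proof.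
move=> he va vb vc.
rewrite (@Phi_mulE M e (e1 + e2) e3 _ c (- (e1 + e2)) (- e3)) //.
  by rewrite Phi_mul.
by apply: (vanishW _ (mulL_vanish va vb)); lia.
Qed.

Lemma diag_comm (A B : mat) : is_diag_mx A -> is_diag_mx B -> A *m B = B *m A.
Proof. by move=> /diag_mxP[d ->] /diag_mxP[e ->]; exact: diag_mxC. Qed.

End Alg.
Arguments delta {K n}.
Section Ana.
Variable K : numFieldType.

Lemma cvg_bigsum {T : Type} (F : set_system T) {FF : Filter F} (W : normedModType K)
  (I : Type) (r : seq I) (h : I -> T -> W) (l : I -> W) :
  (forall i, h i @ F --> l i) ->
  (fun t => \sum_(i <- r) h i t) @ F --> \sum_(i <- r) l i.
Proof.
move=> hl; elim: r => [|c r IH].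
  rewrite big_nil; under eq_fun do rewrite big_nil; exact: cvg_cst.
rewrite big_cons; under eq_fun do rewrite big_cons.
exact: (cvgD (hl c) IH).
Qed.

Lemma mulmx_cvg {T : Type} (F : set_system T) {FF : Filter F} (p q r : nat)
  (f : T -> 'M[K]_(p, q)) (g : T -> 'M[K]_(q, r)) (A : 'M[K]_(p, q)) (B : 'M[K]_(q, r)) :
  f @ F --> A -> g @ F --> B -> (fun t => f t *m g t) @ F --> A *m B.
Proof.
move=> fA gB.
have E : forall (X : 'M[K]_(p, q)) (Y : 'M[K]_(q, r)), X *m Y =
   \sum_(i < p) \sum_(j < r) (\sum_(l < q) X i l * Y l j) *: delta_mx i j.
  move=> X Y; rewrite [LHS]matrix_sum_delta.
  by apply: eq_bigr => i _; apply: eq_bigr => j _; rewrite mxE.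
under eq_fun do rewrite E.
rewrite E.
apply: cvg_bigsum => i; apply: cvg_bigsum => j.
apply: cvgZr_tmp; apply: cvg_bigsum => l.
apply: cvgM.
  exact: (cvg_comp _ _ fA (@coord_continuous K p q i l A)).
exact: (cvg_comp _ _ gB (@coord_continuous K q r l j B)).
Qed.


Lemma der_mulmx (V : normedModType K) (p q r : nat)
  (f : V -> 'M[K]_(p, q)) (g : V -> 'M[K]_(q, r)) (x v : V) :
  derivable f x v -> derivable g x v ->
  (fun h => h^-1 *: (((fun y => f y *m g y) \o shift x) (h *: v) - f x *m g x)) @ 0^'
    --> f x *m 'D_v g x + 'D_v f x *m g x.
Proof.
move=> df dg.
have cf : f (h *: v + x) @[h --> 0^'] --> f x.
  suff : {for 0, continuous (fun h : K => f (h *: v + x))}.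
    by move=> /continuous_withinNx; rewrite scale0r add0r.
  exact/differentiable_continuous/derivable1_diffP/(derivable1P _ _ _).1.
have E : forall h : K, h^-1 *: (((fun y => f y *m g y) \o shift x) (h *: v) - f x *m g x)
   = f (h *: v + x) *m (h^-1 *: (g (h *: v + x) - g x)) + (h^-1 *: (f (h *: v + x) - f x)) *m g x.
  move=> h /=; rewrite -scalemxAr -scalemxAl -scalerDr; congr (_ *: _).
  by rewrite mulmxBr mulmxBl addrA subrK.
under eq_fun do rewrite E.
apply: cvgD.
  exact: (mulmx_cvg cf dg).
exact: (mulmx_cvg df (cvg_cst _)).
Qed.

Lemma derivable_mulmx (V : normedModType K) (p q r : nat)
  (f : V -> 'M[K]_(p, q)) (g : V -> 'M[K]_(q, r)) (x v : V) :
  derivable f x v -> derivable g x v -> derivable (fun y => f y *m g y) x v.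
Proof. by move=> df dg; apply/cvg_ex; eexists; exact: der_mulmx. Qed.

Lemma derive_mulmx (V : normedModType K) (p q r : nat)
  (f : V -> 'M[K]_(p, q)) (g : V -> 'M[K]_(q, r)) (x v : V) :
  derivable f x v -> derivable g x v ->
  'D_v (fun y => f y *m g y) x = f x *m 'D_v g x + 'D_v f x *m g x.
Proof. by move=> df dg; apply: cvg_lim (der_mulmx df dg). Qed.

End Ana.
Section Ser.
Variables (K : numFieldType) (n : nat).
Local Notation mat := 'M[K]_n.
Local Notation pt := 'rV[K]_n.

Lemma near_open (U : set pt) (y : pt) : open U -> U y -> \forall z \near y, U z.
Proof. by move=> HU Uy; apply: open_nbhs_nbhs. Qed.

Lemma derive_vanish (U : set pt) (v y : pt) (F : int -> pt -> mat) N :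
  open U -> U y -> (forall z, U z -> vanish N (fun j => F j z)) ->
  vanish N (fun j => 'D_v (F j) y).
Proof.
move=> HU Uy F0 j hj.
rewrite (@near_eq_derive _ _ _ (F j) (cst 0) y v); first by rewrite derive_cst.
by apply: filterS (near_open HU Uy) => z Uz; rewrite F0.
Qed.

Lemma dmulL (U : set pt) (v : pt) (F G : int -> pt -> mat) (NF NG : int) :
  open U ->
  (forall z, U z -> vanish NF (fun j => F j z)) ->
  (forall z, U z -> vanish NG (fun j => G j z)) ->
  (forall j z, U z -> derivable (F j) z v) ->
  (forall j z, U z -> derivable (G j) z v) ->
  forall y k, U y ->
  derivable (fun z => mulL (fun j => F j z) (fun j => G j z) k) y v /\
  'D_v (fun z => mulL (fun j => F j z) (fun j => G j z) k) y =
    mulL (fun j => 'D_v (F j) y) (fun j => G j y) k +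
    mulL (fun j => F j y) (fun j => 'D_v (G j) y) k.
Proof.
move=> HU F0 G0 dF dG y k Uy.
set L := (absz (k - NF - NG)%R).+1.
pose W := \sum_(t < L) (fun z => F (NF + t%:Z) z *m G (k - NF - t%:Z) z).
have nW : \forall z \near y, W z = mulL (fun j => F j z) (fun j => G j z) k.
  apply: filterS (near_open HU Uy) => z Uz.
  by rewrite /W fct_sumE (mulL_win k (F0 z Uz) (G0 z Uz)).
have dW : derivable W y v.
  by apply: derivable_sum => t; apply: derivable_mulmx; [apply: dF|apply: dG].
split; first exact: (near_eq_derivable nW dW).
rewrite -(@near_eq_derive _ _ _ W _ y v nW) /W derive_sum; last first.
  by move=> t; apply: derivable_mulmx; [apply: dF|apply: dG].
rewrite (eq_bigr (fun t : 'I_L => F (NF + t%:Z) y *m 'D_v (G (k - NF - t%:Z)) y + 'D_v (F (NF + t%:Z)) y *m G (k - NF - t%:Z) y)); last first.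
  by move=> t _; apply: derive_mulmx; [apply: dF|apply: dG].
rewrite big_split /= addrC.
rewrite (mulL_win k (derive_vanish v HU Uy F0) (G0 y Uy)).
by rewrite (mulL_win k (F0 y Uy) (derive_vanish v HU Uy G0)).
Qed.

End Ser.
Lemma zz (R : zmodType) (X Y W : R) : X - Y - (X - W) + (Y - W) = 0.
Proof.
rewrite opprB !addrA (addrAC (X - Y) W (-X)) (addrAC X (-Y) (-X)) subrr add0r.
by rewrite (addrAC (-Y) W Y) addNr add0r subrr.
Qed.

Lemma key_ring (R : pzRingType) (t s dt ds a h B Z : R) :
  s * t = 1 -> t * s = 1 -> s * (Z * dt + a * t) = h -> dt * s + t * ds = 0 ->
  h * B = B * h -> Z * t = t * Z -> Z * B = B * Z -> Z * s = s * Z ->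
  Z * (dt * B * s + t * B * ds) + (a * (t * B * s) - t * B * s * a) = 0.
Proof.
move=> Hst Hts Hg Hd HB Zt ZB Zs.
have st1 : forall X, X * s * t = X by move=> X; rewrite -mulrA Hst mulr1.
have ts1 : forall X, X * t * s = X by move=> X; rewrite -mulrA Hts mulr1.
have E1 : Z * dt = t * h - a * t by rewrite -Hg mulrA Hts mul1r addrK.
have E2 : Z * ds = - (s * (Z * dt) * s).
  have e : t * ds = - (dt * s) by rewrite -(addKr (dt * s) (t * ds)) Hd addr0.
  by rewrite -[ds]mul1r -Hst -mulrA e !mulrN !mulrA Zs.
have E3 : Z * (t * B * ds) = t * B * (Z * ds) by rewrite !mulrA Zt -(mulrA t Z B) ZB !mulrA.
rewrite E1 in E2; rewrite mulrDr E3 E2 !mulrA E1.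
rewrite !(mulrBl, mulrBr, mulrN, mulNr, mulrDl, mulrDr, mulrA).
rewrite ?st1 ?ts1.
by rewrite -(mulrA t h B) HB mulrA zz.
Qed.
Section Core.
Variables (K : numFieldType) (n : nat).
Local Notation mat := 'M[K]_n.
Local Notation pt := 'rV[K]_n.

Lemma core (U : set pt) (a : 'I_n) (T Ti A H : ser K n) (b : int -> mat) (x : pt) :
  open U -> ser_inverse_on U T Ti -> diag_laurent b -> U x ->
  vanish (-1) (fun j => A j x) -> vanish (-1) (fun j => H j x) ->
  (forall j, is_diag_mx (H j x)) ->
  (forall k, gauge a A T Ti k x = H k x) ->
  forall k, opcomm a A (phi T Ti b) k x = 0.
Proof.
move=> HU [[holT T0] [[holTi Ti0] [TTi TiT]]] [bd [Nb vb]] Ux A0 H0 Hd hg k.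
have vT : forall z, U z -> vanish 0 (fun j => T j z) by move=> z Uz j hj; apply: T0.
have vTi : forall z, U z -> vanish 0 (fun j => Ti j z) by move=> z Uz j hj; apply: Ti0.
have dT : forall j z, U z -> derivable (T j) z (cvec a).
  by move=> j z Uz; apply: diff_derivable; apply: holT.
have dTi : forall j z, U z -> derivable (Ti j) z (cvec a).
  by move=> j z Uz; apply: diff_derivable; apply: holTi.
pose t := fun j => T j x; pose s := fun j => Ti j x.
pose dt := fun j => 'D_(cvec a) (T j) x; pose ds := fun j => 'D_(cvec a) (Ti j) x.
pose A' := fun j => A j x; pose H' := fun j => H j x.
have F1 : forall k', mulL s t k' = delta k' by move=> k'; exact: (TiT k' x Ux).
have F2 : forall k', mulL t s k' = delta k' by move=> k'; exact: (TTi k' x Ux).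
have F3 : forall k', mulL s (fun j => dt j + mulL A' t j) k' = H' k' by move=> k'; exact: hg.
have F4 : forall k, mulL dt s k + mulL t ds k = 0.
  move=> k'; have [_ <-] := dmulL HU vT vTi dT dTi k' Ux.
  rewrite (@near_eq_derive _ _ _ _ (cst (delta k')) x (cvec a)); first by rewrite derive_cst.
  by apply: filterS (near_open HU Ux) => z Uz; exact: (TTi k' z Uz).
pose G := fun (i : int) (_ : pt) => b i.
have vG : forall z, U z -> vanish Nb (fun i => G i z) by move=> z _.
have dG : forall j z, U z -> derivable (G j) z (cvec a) by move=> j z _; exact: derivable_cst.
pose F' := fun j z => mulL (fun i => T i z) (fun i => G i z) j.
have vF' : forall z, U z -> vanish (0 + Nb) (fun j => F' j z).
  by move=> z Uz; exact: (mulL_vanish (vT z Uz) (vG z Uz)).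
have dF' : forall j z, U z -> derivable (F' j) z (cvec a).
  by move=> j z Uz; exact: (dmulL HU vT vG dT dG j Uz).1.
have DF' : forall j, 'D_(cvec a) (F' j) x = mulL dt b j.
  move=> j; rewrite (dmulL HU vT vG dT dG j Ux).2.
  have -> : (fun i => 'D_(cvec a) (G i) x) = (fun _ => 0).
    by apply: funext => i; exact: derive_cst.
  by rewrite (mulL_0r _ (vT x Ux)) addr0.
have F5 : forall k, 'D_(cvec a) (phi T Ti b k) x = mulL (mulL dt b) s k + mulL (mulL t b) ds k.
  move=> k'; have -> : phi T Ti b k' = fun z => mulL (fun j => F' j z) (fun j => Ti j z) k' by [].
  rewrite (dmulL HU vF' vTi dF' dTi k' Ux).2.
  by congr (mulL _ _ _ + _); apply: funext => j; exact: DF'.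
have vt : vanish 0 t := vT x Ux.
have vs : vanish 0 s := vTi x Ux.
have vdt : vanish 0 dt := derive_vanish (cvec a) HU Ux vT.
have vds : vanish 0 ds := derive_vanish (cvec a) HU Ux vTi.
pose P := mulL (mulL t b) s.
have vP : vanish (0 + Nb + 0) P := mulL_vanish (mulL_vanish vt vb) vs.
change ('D_(cvec a) (phi T Ti b k) x + (mulL A' P k - mulL P A' k) = 0).
rewrite F5.
have vdt0 : vanish (- 0) dt by apply: (vanishW _ vdt); lia.
have vds0 : vanish (- 0) ds by apply: (vanishW _ vds); lia.
have vt0 : vanish (- 0) t by apply: (vanishW _ vt); lia.
have vs0 : vanish (- 0) s by apply: (vanishW _ vs); lia.
have vbe : vanish (- (- Nb)) b by rewrite opprK.
have vA : vanish (-1) A' := A0.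
have vH : vanish (-1) H' := H0.
case: (ltrP (k + 1 - Nb) 0) => hk.
  have z1 : mulL (mulL dt b) s k = 0 by apply: (mulL_vanish (mulL_vanish vdt vb) vs); lia.
  have z2 : mulL (mulL t b) ds k = 0 by apply: (mulL_vanish (mulL_vanish vt vb) vds); lia.
  have z3 : mulL A' P k = 0 by apply: (mulL_vanish vA vP); lia.
  have z4 : mulL P A' k = 0 by apply: (mulL_vanish vP vA); lia.
  by rewrite z1 z2 z3 z4 subrr !addr0.
pose M := (absz (k + 1 - Nb)%R).+1.
have hM : (0 < M)%N by [].
pose j : 'I_M := Ordinal (ltnSn (absz (k + 1 - Nb)%R)).
pose Gs := fun k => (mulL (mulL dt b) s k + mulL (mulL t b) ds k) + (mulL A' P k - mulL P A' k).
suff E : Phi M (1 - Nb) Gs = Phi M (1 - Nb) (fun _ => 0).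
  have := Phi_extract j hM E.
  have -> : (j%:Z - (1 - Nb)) = k by rewrite /=; lia.
  by [].
pose Z := Phi M 1 (@delta K n).
pose T' := Phi M 0 t; pose S' := Phi M 0 s; pose dT' := Phi M 0 dt; pose dS' := Phi M 0 ds.
pose A'' := Phi M 1 A'; pose H'' := Phi M 1 H'; pose B' := Phi M (- Nb) b.
have eP : Phi M (- Nb) P = T' *m B' *m S' by apply: Phi_mul3 => //; lia.
have vX : vanish Nb (fun k => mulL (mulL dt b) s k + mulL (mulL t b) ds k).
  move=> i hi; rewrite (mulL_vanish (mulL_vanish vdt vb) vs) ?(mulL_vanish (mulL_vanish vt vb) vds) ?addr0 //; lia.
have eX : Phi M (1 - Nb) (fun k => mulL (mulL dt b) s k + mulL (mulL t b) ds k)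
   = Z *m (dT' *m B' *m S' + T' *m B' *m dS').
  rewrite (@Phi_Z _ _ M (- Nb) (1 - Nb) _ Nb) //; last by rewrite opprK.
  by rewrite Phi_add (@Phi_mul3 _ _ M (- Nb) 0 (- Nb) 0) ?(@Phi_mul3 _ _ M (- Nb) 0 (- Nb) 0 t) //; lia.
have eA : Phi M (1 - Nb) (mulL A' P) = A'' *m (T' *m B' *m S').
  rewrite (@Phi_mulE _ _ M (1 - Nb) 1 (- Nb) A' P (-1) Nb) ?eP //; try lia;
    try (by rewrite opprK); apply: (vanishW _ vP); lia.
have eP2 : Phi M (1 - Nb) (mulL P A') = T' *m B' *m S' *m A''.
  rewrite (@Phi_mulE _ _ M (1 - Nb) (- Nb) 1 P A' Nb (-1)) ?eP //; try lia;
    try (by rewrite opprK); apply: (vanishW _ vP); lia.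
rewrite Phi_0 /Gs Phi_add Phi_sub eX eA eP2.
have R1 : S' *m T' = 1%:M by rewrite -Phi_mul0 // (Phi_ext M 0 F1) Phi_delta.
have R2 : T' *m S' = 1%:M by rewrite -Phi_mul0 // (Phi_ext M 0 F2) Phi_delta.
have R4 : dT' *m S' + T' *m dS' = 0.
  by rewrite -!Phi_mul0 // -Phi_add (Phi_ext M 0 F4) Phi_0.
have R3 : S' *m (Z *m dT' + A'' *m T') = H''.
  have e1 : Phi M 1 (fun j => dt j + mulL A' t j) = Z *m dT' + A'' *m T'.
    rewrite Phi_add (@Phi_Z _ _ M 0 1 dt 0) //; try lia.
    rewrite (@Phi_mulE _ _ M 1 1 0 A' t (-1) 0) //; try lia.
  rewrite -e1 -(@Phi_mulE _ _ M 1 0 1 s _ 0 (-1)) //; try lia.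
    by rewrite (Phi_ext M 1 F3).
  move=> i hi; rewrite vdt ?(mulL_vanish vA vt) ?addr0 //; lia.
have R5 : H'' *m B' = B' *m H''.
  rewrite -(@Phi_mulE _ _ M (1 - Nb) 1 (- Nb) H' b (-1) Nb) //; last by rewrite opprK.
  rewrite -(@Phi_mulE _ _ M (1 - Nb) (- Nb) 1 b H' Nb (-1)) //; first last.
  - by rewrite opprK.
  - lia.
  apply: Phi_ext => i; apply: (mulL_comm _ vH vb) => i1 j1.
  exact: (diag_comm (Hd i1) (bd j1)).
have Zt : Z *m T' = T' *m Z by apply: (@Z_comm _ _ M 0 t 0) => //; rewrite oppr0.
have Zs : Z *m S' = S' *m Z by apply: (@Z_comm _ _ M 0 s 0) => //; rewrite oppr0.
have ZB : Z *m B' = B' *m Z by apply: (@Z_comm _ _ M (- Nb) b Nb) => //; rewrite opprK.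
exact: (key_ring R1 R2 R3 R4 R5 Zt ZB Zs).
Qed.
End Core.
Section Trunc.
Variables (K : numFieldType) (n : nat).
Local Notation mat := 'M[K]_n.
Local Notation pt := 'rV[K]_n.

Lemma trunc1 (C : 'I_n -> pt -> mat) (a : 'I_n) (P : ser K n) (x : pt) (k N : int) :
  vanish N (fun j => P j x) -> opcomm a (Lpot C a) P k x = 0 ->
  opcomm a (Lpot C a) (truncle (-1) P) k x
  = monom (-1) (fun y => C a y *m P 0 y - P 0 y *m C a y) k x.
Proof.
move=> vP; rewrite /opcomm /addS /subS /dS /mulS /truncle /monom /Lpot /pd /=.
have vQ : vanish N (fun j => if j <= -1 then P j x else 0).
  by move=> j hj; case: ifP => // _; apply: vP.
rewrite (mulL_monoml _ _ _ vP) (mulL_monomr _ _ _ vP) (mulL_monoml _ _ _ vQ) (mulL_monomr _ _ _ vQ).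
move=> c.
have D0 : 'D_(cvec a) (fun _ : pt => (0 : mat)) x = 0 by exact: derive_cst.
have hD : forall c : bool, 'D_(cvec a) (fun x0 : pt => if c then P k x0 else 0) x = if c then 'D_(cvec a) (P k) x else 0.
  by case.
rewrite hD.
case: ifP => h1; case: ifP => h2; case: ifP => h3; try (exfalso; lia).
- exact: c.
- have e : k - -1 = 0 by move/eqP: h3 => h3; lia.
  move: c; rewrite e mulmx0 mul0mx subrr addr0 => /eqP; rewrite addr_eq0 => /eqP ->.
  by rewrite mulNmx mulmxN opprB opprK addrC.
- by rewrite mulmx0 mul0mx subrr addr0.
Qed.

Lemma zz3 (R : zmodType) (D a b c d : R) :
  D + ((a + - c) - (b + - d)) = 0 -> D + ((a + 0) - (b + 0)) = c - d.
Proof.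
have id : D + (a - b) - (c - d) = D + ((a - c) - (b - d)).
  by rewrite !opprB !addrA (addrAC (D + a) (-b) d) (addrAC (D + a + d) (-b) (-c)) (addrAC (D + a) (-c) d).
by move=> h; rewrite !addr0; apply/subr0_eq; rewrite id h.
Qed.

Lemma trunc2 (C : 'I_n -> pt -> mat) (T0 : pt -> mat) (X : pt -> pt) (i : 'I_n)
  (P : ser K n) (y : pt) (k N : int) :
  vanish N (fun j => P j y) -> opcomm i (Ltpot C T0 X i) P k y = 0 ->
  opcomm i (Ltpot C T0 X i) (truncle 0 P) k y
  = monom 0 (fun z => Emx i *m P 1 z - P 1 z *m Emx i) k y.
Proof.
move=> vP; rewrite /opcomm /addS /subS /dS /mulS /truncle /monom /Ltpot /pd /addS /monom /=.
have vQ : vanish N (fun j => if j <= 0 then P j y else 0).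
  by move=> j hj; case: ifP => // _; apply: vP.
have v0 : forall (M : mat), vanish (-1) (fun j : int => if j == 0 then M else 0).
  by move=> M j hj; case: eqP => // e; lia.
have v1 : forall (M : mat), vanish (-1) (fun j : int => if j == -1 then M else 0).
  by move=> M j hj; case: eqP => // e; lia.
rewrite !(mulL_addl _ (v0 _) (v1 _) vP) !(mulL_addr _ vP (v0 _) (v1 _)).
rewrite !(mulL_addl _ (v0 _) (v1 _) vQ) !(mulL_addr _ vQ (v0 _) (v1 _)).
rewrite (mulL_monoml _ _ _ vP) (mulL_monomr _ _ _ vP) (mulL_monoml _ _ _ vQ) (mulL_monomr _ _ _ vQ).
rewrite (mulL_monoml _ _ _ vP) (mulL_monomr _ _ _ vP) (mulL_monoml _ _ _ vQ) (mulL_monomr _ _ _ vQ).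
move=> c.
have D0 : 'D_(cvec i) (fun _ : pt => (0 : mat)) y = 0 by exact: derive_cst.
have hD : forall c : bool, 'D_(cvec i) (fun x0 : pt => if c then P k x0 else 0) y = if c then 'D_(cvec i) (P k) y else 0.
  by case.
rewrite hD.
case: ifP => h1; case: ifP => h2; case: ifP => h3; case: ifP => h4; try (exfalso; lia).
- exact: c.
- have e : k - -1 = 1 by lia.
  move: c; rewrite e mulNmx mulmxN !mulmx0 !mul0mx => c.
  exact: zz3 c.
- by rewrite !mulmx0 !mul0mx !(addr0, subr0, add0r).
Qed.

End Trunc.
Lemma diag_addP (K : numFieldType) (n : nat) (A B : 'M[K]_n) :
  is_diag_mx A -> is_diag_mx B -> is_diag_mx (A + B).
Proof.
move=> /is_diag_mxP hA /is_diag_mxP hB; apply/is_diag_mxP => i j hij.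
by rewrite mxE hA // hB // addr0.
Qed.

Lemma diag_oppEmx (K : numFieldType) (n : nat) (i : 'I_n) : is_diag_mx (- (Emx i : 'M[K]_n)).
Proof.
apply/is_diag_mxP => r c hrc; rewrite !mxE.
case: eqP => [er|]; case: eqP => [ec|] //=; rewrite ?oppr0 //.
by exfalso; move: hrc; rewrite er ec eqxx.
Qed.

Unset Implicit Arguments.

Theorem mainTheorem4 (R : realType) (n : nat) (n_gt0 : (0 < n)%N)
  (U : set 'rV[R[i]]_n) (C : 'I_n -> 'rV[R[i]]_n -> 'M[R[i]]_n)
  (eta : 'M[R[i]]_n)
  (* semisimple Frobenius manifold on U, unit d/dx^1 *)
  (HF : frobenius_manifold U C eta (Ordinal n_gt0))
  (HSS : semisimple_on U C)
  (* T0(x): columns v_i(x) in theta_i; u : canonical coordinates with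
     T0^{-1} C_a T0 = a_a = diag(du/dx^a); X = inverse coordinate change *)
  (T0 : 'rV[R[i]]_n -> 'M[R[i]]_n) (u : 'rV[R[i]]_n -> 'rV[R[i]]_n)
  (X : 'rV[R[i]]_n -> 'rV[R[i]]_n)
  (HT0 : holo_on U T0 /\ forall x, U x -> T0 x \in unitmx)
  (Hu : holo_on U u /\
        forall a x, U x -> invmx (T0 x) *m C a x *m T0 x = diag_mx ('D_(cvec a) u x))
  (V : set 'rV[R[i]]_n) (HV : V = u @` U)
  (HX : open_set V /\ holo_on V X /\ forall x, U x -> X (u x) = x)
  (* dressing transformations *)
  (T Tinv : ser R[i] n) (HT : dressing_L U C T Tinv)
  (Tt Ttinv : ser R[i] n) (HTt : dressing_Lt V C T0 X Tt Ttinv) :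
  forall b : int -> 'M[R[i]]_n, diag_laurent b ->
    (forall (a : 'I_n) (x : 'rV[R[i]]_n) (k : int), U x ->
       opcomm a (Lpot C a) (truncle (-1) (phi T Tinv b)) k x
       = monom (-1) (fun y => C a y *m phi T Tinv b 0 y - phi T Tinv b 0 y *m C a y) k x)
 /\ (forall (i : 'I_n) (y : 'rV[R[i]]_n) (k : int), V y ->
       opcomm i (Ltpot C T0 X i) (truncle 0 (phi Tt Ttinv b)) k y
       = monom 0 (fun z => Emx i *m phi Tt Ttinv b 1 z - phi Tt Ttinv b 1 z *m Emx i) k y).
Proof.
move=> b Hb; have [_ [Nb vb]] := Hb; split.
- move=> a x k Ux.
  have [Hinv [h Hh]] := HT.
  have HU := HF.1.
  have [[_ T0'] [[_ Ti0'] _]] := Hinv.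
  have vA : vanish (-1) (fun j => Lpot C a j x).
    by move=> j hj; rewrite /Lpot /monom; case: eqP => // e; lia.
  have vH : vanish (-1) (fun j => h a j x) by move=> j hj; exact: (Hh a j x Ux).2.1.
  have Hd : forall j, is_diag_mx (h a j x) by move=> j; exact: (Hh a j x Ux).1.
  have Hg : forall k, gauge a (Lpot C a) T Tinv k x = h a k x by move=> k'; exact: (Hh a k' x Ux).2.2.
  have c := @core _ _ U a T Tinv (Lpot C a) (h a) b x HU Hinv Hb Ux vA vH Hd Hg k.
  have vt : vanish 0 (fun j => T j x) by move=> j hj; apply: T0'.
  have vs : vanish 0 (fun j => Tinv j x) by move=> j hj; apply: Ti0'.
  exact: (trunc1 (mulL_vanish (mulL_vanish vt vb) vs) c).
- move=> i y k Vy.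
  have [Hinv [_ [h Hh]]] := HTt.
  have HV' := HX.1.
  have [[_ T0'] [[_ Ti0'] _]] := Hinv.
  pose H := fun k u => monom (-1) (fun _ => - (Emx i : 'M[R[i]]_n)) k u + h i k u.
  have vA : vanish (-1) (fun j => Ltpot C T0 X i j y).
    move=> j hj; rewrite /Ltpot /addS /monom.
    by case: eqP => e; [lia|]; case: eqP => e'; [lia|]; rewrite addr0.
  have vH : vanish (-1) (fun j => H j y).
    move=> j hj; rewrite /H /monom (Hh i j y Vy).2.1; last by lia.
    by case: eqP => e; [lia|]; rewrite addr0.
  have Hd : forall j, is_diag_mx (H j y).
    move=> j; apply: diag_addP; last exact: (Hh i j y Vy).1.
    by rewrite /monom; case: eqP => _; [exact: diag_oppEmx | exact: mx0_is_diag].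
  have Hg : forall k, gauge i (Ltpot C T0 X i) Tt Ttinv k y = H k y.
    by move=> k'; exact: (Hh i k' y Vy).2.2.
  have c := @core _ _ V i Tt Ttinv (Ltpot C T0 X i) H b y HV' Hinv Hb Vy vA vH Hd Hg k.
  have vt : vanish 0 (fun j => Tt j y) by move=> j hj; apply: T0'.
  have vs : vanish 0 (fun j => Ttinv j y) by move=> j hj; apply: Ti0'.
  exact: (trunc2 (mulL_vanish (mulL_vanish vt vb) vs) c).
Qed.
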